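(* $C_{\mathbb N}=C^0_{\mathbb N}=3$.
   Context: $\mathbb N=\{1,2,3,\dots\}$ is regarded as the infinite path graph with edges $\{j,j+1\}$, $j\in\mathbb N$, and graph distance $d(i,j)=|i-j|$. A measure $\mu$ is a weight function $\mu:\mathbb N\to(0,\infty)$, with $\mu(A)=\sum_{v\in A}\mu(v)$. Closed balls are $B(x,r)=\{y:d(x,y)\le r\}$. The doubling constant of $\mu$ is $C_\mu=\sup\{\mu(B(x,2k+1))/\mu(B(x,k)): x\in \mathbb N,\ k\in\{0,1,2,\dots\}\}$, and $\mu$ is doubling if $C_\mu<\infty$. $C_{\mathbb N}=\inf\{C_\mu:\mu\text{ doubling}\}$; $C^0_\mu=\sup_{x}\mu(B(x,1))/\mu(x)$ and $C^0_{\mathbb N}=\inf_\mu C^0_\mu$, the infimum over doubling measures. *)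

(* Defs.v *)
From Stdlib Require Import Reals.
From Coquelicot Require Import Coquelicot.
Open Scope R_scope.

(* Points of the path graph N = {1,2,3,...} are naturals v with 1 <= v. *)

(* A measure: a positive weight on every vertex v >= 1 (value at 0 is irrelevant). *)
Definition is_measure (mu : nat -> R) : Prop := forall v : nat, (1 <= v)%nat -> 0 < mu v.

Fixpoint psum (f : nat -> R) (n : nat) : R :=
  match n with
  | O => 0
  | S m => psum f m + f (S m)
  end.

(* mu(B(x,r)) where B(x,r) = {y in N : |x - y| <= r} = {y >= 1 : x - r <= y <= x + r}
   (nat subtraction is truncated, which is harmless since y >= 1 anyway). *)
Definition ball_mass (mu : nat -> R) (x r : nat) : R :=
  psum (fun y => if Nat.leb (x - r) y then mu y else 0) (x + r).

Definition C_mu (mu : nat -> R) : Rbar :=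
  Lub_Rbar (fun c => exists x k : nat, (1 <= x)%nat /\
                       c = ball_mass mu x (2 * k + 1) / ball_mass mu x k).

Definition doubling (mu : nat -> R) : Prop := is_measure mu /\ is_finite (C_mu mu).

Definition C0_mu (mu : nat -> R) : Rbar :=
  Lub_Rbar (fun c => exists x : nat, (1 <= x)%nat /\ c = ball_mass mu x 1 / mu x).

Definition C_N : Rbar :=
  Glb_Rbar (fun c => exists mu, doubling mu /\ Finite c = C_mu mu).

Definition C0_N : Rbar :=
  Glb_Rbar (fun c => exists mu, doubling mu /\ Finite c = C0_mu mu).

(* Main.v *)
Require Import Defs.
From Stdlib Require Import Reals Lra Lia.
From Coquelicot Require Import Coquelicot.
Open Scope R_scope.

Lemma psum_zero g a n : (n < a)%nat ->
  psum (fun y => if Nat.leb a y then g y else 0) n = 0.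
Proof.
  induction n as [|n IH]; intro H; simpl; [reflexivity|].
  rewrite IH by lia.
  destruct (Nat.leb_spec a (S n)); [lia| ring].
Qed.

Lemma bm0 mu x : (1 <= x)%nat -> ball_mass mu x 0 = mu x.
Proof.
  intro Hx. unfold ball_mass. rewrite Nat.sub_0_r, Nat.add_0_r.
  destruct x as [|m]; [lia|]. cbn [psum].
  rewrite psum_zero by lia. rewrite Nat.leb_refl. ring.
Qed.

Lemma bm11 mu : ball_mass mu 1 1 = mu 1%nat + mu 2%nat.
Proof. unfold ball_mass. simpl. ring. Qed.

Lemma bm1S mu n : ball_mass mu (S (S n)) 1 =
  mu (S n) + mu (S (S n)) + mu (S (S (S n))).
Proof.
  unfold ball_mass.
  replace (S (S n) - 1)%nat with (S n) by lia.
  replace (S (S n) + 1)%nat with (S (S (S n))) by lia.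
  cbn [psum]. rewrite psum_zero by lia.
  destruct (Nat.leb_spec (S n) (S n)); [|lia].
  destruct (Nat.leb_spec (S n) (S (S n))); [|lia].
  destruct (Nat.leb_spec (S n) (S (S (S n)))); [|lia].
  ring.
Qed.

Lemma lower mu c : is_measure mu ->
  (forall x, (1 <= x)%nat -> ball_mass mu x 1 <= c * mu x) -> 3 <= c.
Proof.
  intros Hm H.
  destruct (Rle_lt_dec 3 c) as [h|h]; [exact h|exfalso].
  set (l := c - 1).
  assert (Hb : mu 2%nat <= l * mu 1%nat).
  { pose proof (H 1%nat (le_n _)) as H1. rewrite bm11 in H1. unfold l. lra. }
  assert (Hs : forall n, mu (S n) + mu (S (S (S n))) <= l * mu (S (S n))).
  { intro n. pose proof (H (S (S n)) ltac:(lia)) as H1. rewrite bm1S in H1. unfold l. lra. }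
  assert (p1 := Hm 1%nat (le_n _)). assert (p2 := Hm 2%nat ltac:(lia)).
  destruct (Rle_lt_dec l 0) as [hl|hl].
  { nra. }
  set (d := 1 - l*l/4). assert (hd : 0 < d) by (unfold d, l in *; nra).
  set (e := d / l). assert (he : 0 < e) by (unfold e; apply Rdiv_lt_0_compat; lra).
  assert (Hi : forall n, mu (S (S n)) <= (l - INR n * e) * mu (S n)).
  { induction n as [|n IH].
    - simpl. lra.
    - set (t := l - INR n * e) in IH.
      assert (q1 := Hm (S n) ltac:(lia)). assert (q2 := Hm (S (S n)) ltac:(lia)).
      assert (q3 := Hm (S (S (S n))) ltac:(lia)).
      destruct (Rle_lt_dec t 0) as [ht|ht]; [nra|].
      assert (tl : t <= l) by (unfold t; pose proof (pos_INR n); nra).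
      assert (Hk : mu (S (S n)) / t <= mu (S n)).
      { apply Rmult_le_reg_r with t; [lra|]. unfold Rdiv. rewrite Rmult_assoc, Rinv_l by lra. lra. }
      assert (Hq : l - / t <= t - e).
      { assert (t * t - l * t + 1 - e * t >= 0).
        { assert (e * t <= d).
          { assert (e * l = d) by (unfold e; field; lra).
            assert (e * t <= e * l) by (apply Rmult_le_compat_l; lra). lra. }
          assert (0 <= (t - l/2) * (t - l/2)) by apply Rle_0_sqr.
          unfold d in *. lra. }
        apply Rmult_le_reg_r with t; [lra|].
        replace ((l - / t) * t) with (l * t - 1) by (field; lra). nra. }
      rewrite S_INR. replace (l - (INR n + 1) * e) with (t - e) by (unfold t; ring).
      pose proof (Hs n).
      assert (mu (S (S n)) * / t <= mu (S n)) by exact Hk.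
      assert (l * mu (S (S n)) - mu (S (S n)) * / t <= (t - e) * mu (S (S n))) by nra.
      nra. }
  destruct (INR_unbounded (l / e)) as [N HN].
  assert (l - INR N * e < 0).
  { apply Rmult_gt_compat_r with (r := e) in HN; [|lra].
    unfold Rdiv in HN. rewrite Rmult_assoc, Rinv_l in HN by lra. lra. }
  pose proof (Hi N). pose proof (Hm (S N) ltac:(lia)). pose proof (Hm (S (S N)) ltac:(lia)).
  nra.
Qed.

Lemma psum_count a n :
  psum (fun y => if Nat.leb a y then 1 else 0) n = INR ((n + 1) - Nat.max a 1).
Proof.
  induction n as [|n IH].
  - cbn [psum]. replace (0 + 1 - Nat.max a 1)%nat with 0%nat by lia. reflexivity.
  - cbn [psum]. rewrite IH.
    destruct (Nat.leb_spec a (S n)).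
    + replace (S n + 1 - Nat.max a 1)%nat with (S (n + 1 - Nat.max a 1)) by lia.
      rewrite S_INR. ring.
    + replace (S n + 1 - Nat.max a 1)%nat with (n + 1 - Nat.max a 1)%nat by lia. ring.
Qed.

Definition one (n : nat) : R := 1.

Lemma bm_one x r : ball_mass one x r = INR ((x + r + 1) - Nat.max (x - r) 1).
Proof. unfold ball_mass, one. apply psum_count. Qed.

Lemma one_measure : is_measure one.
Proof. intros v _. unfold one. lra. Qed.

Lemma ratio_le a b : (1 <= b)%nat -> (a <= 3 * b)%nat -> INR a / INR b <= 3.
Proof.
  intros Hb Hab. assert (0 < INR b) by (apply lt_0_INR; lia).
  apply Rmult_le_reg_r with (INR b); [lra|].
  unfold Rdiv. rewrite Rmult_assoc, Rinv_l by lra. rewrite Rmult_1_r.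
  apply le_INR in Hab. rewrite mult_INR in Hab. simpl in Hab. lra.
Qed.

Lemma C_one : C_mu one = Finite 3.
Proof.
  apply is_lub_Rbar_unique. split.
  - intros c [x [k [Hx ->]]]. simpl. rewrite !bm_one. apply ratio_le; lia.
  - intros b Hb. apply (Hb 3). exists 2%nat, 0%nat. split; [lia|].
    rewrite !bm_one. simpl. field.
Qed.

Lemma C0_one : C0_mu one = Finite 3.
Proof.
  apply is_lub_Rbar_unique. split.
  - intros c [x [Hx ->]]. simpl. rewrite bm_one.
    replace (one x) with (INR 1) by reflexivity. apply ratio_le; lia.
  - intros b Hb. apply (Hb 3). exists 2%nat. split; [lia|].
    rewrite !bm_one. unfold one. simpl. field.
Qed.

Lemma one_doubling : doubling one.
Proof. split; [apply one_measure| rewrite C_one; reflexivity]. Qed.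

Lemma C_lower mu c : doubling mu -> Finite c = C_mu mu -> 3 <= c.
Proof.
  intros [Hm _] Hc. apply (lower mu); [exact Hm|].
  intros x Hx. pose proof (Lub_Rbar_correct (fun c => exists x k : nat, (1 <= x)%nat /\
                       c = ball_mass mu x (2 * k + 1) / ball_mass mu x k)) as [Hub _].
  fold (C_mu mu) in Hub. rewrite <- Hc in Hub.
  specialize (Hub (ball_mass mu x 1 / ball_mass mu x 0)).
  simpl in Hub. rewrite bm0 in Hub by exact Hx.
  assert (Hp := Hm x Hx).
  assert (Hr : ball_mass mu x 1 / mu x <= c) by (apply Hub; exists x, 0%nat; split; [exact Hx|]; rewrite bm0 by exact Hx; reflexivity).
  apply Rmult_le_compat_r with (r := mu x) in Hr; [|lra].
  unfold Rdiv in Hr. rewrite Rmult_assoc, Rinv_l in Hr by lra. lra.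
Qed.

Lemma C0_lower mu c : doubling mu -> Finite c = C0_mu mu -> 3 <= c.
Proof.
  intros [Hm _] Hc. apply (lower mu); [exact Hm|].
  intros x Hx. pose proof (Lub_Rbar_correct (fun c => exists x : nat, (1 <= x)%nat /\ c = ball_mass mu x 1 / mu x)) as [Hub _].
  fold (C0_mu mu) in Hub. rewrite <- Hc in Hub.
  assert (Hp := Hm x Hx).
  assert (Hr : ball_mass mu x 1 / mu x <= c) by (apply Hub; exists x; split; [exact Hx|reflexivity]).
  apply Rmult_le_compat_r with (r := mu x) in Hr; [|lra].
  unfold Rdiv in Hr. rewrite Rmult_assoc, Rinv_l in Hr by lra. lra.
Qed.

Theorem theorem4p3 : C_N = Finite 3%R /\ C0_N = Finite 3%R.
Proof.
  split; apply is_glb_Rbar_unique; split.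
  - intros c [mu [Hd Hc]]. simpl. eapply C_lower; eauto.
  - intros b Hb. apply Hb. exists one. split; [apply one_doubling| now rewrite C_one].
  - intros c [mu [Hd Hc]]. simpl. eapply C0_lower; eauto.
  - intros b Hb. apply Hb. exists one. split; [apply one_doubling| now rewrite C0_one].
Qed.
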